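(* Let $X_1$ and $X_2$ be independent continuous random variables with densities $f_{X_1},f_{X_2}$ that are symmetric around their respective means and positive on all of $\mathbb{R}$. For $\theta\in[0,1]$ and $w\in[0,1]$ define $$L(w\mid\theta)=\theta\,\mathbf{E}\big[X_1^2\,\mathbf{1}\big((1-w)X_2^2\ge wX_1^2\big)\big]+(1-\theta)\,\mathbf{E}\big[X_2^2\,\mathbf{1}\big((1-w)X_2^2<wX_1^2\big)\big].$$ Then for each fixed $\theta\in[0,1]$, the function $w\mapsto L(w\mid\theta)$ is strictly quasi-convex and is minimized at $w^\star=\theta$.
   Context: $\mathbf{1}(\cdot)$ denotes the indicator function of an event. *)

(* Defs.v *)
From HB Require Import structures.
From mathcomp Require Import all_boot all_order all_algebra.
From mathcomp Require Import all_classical all_reals all_analysis.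
Set Implicit Arguments. Unset Strict Implicit. Unset Printing Implicit Defensive.
Import Order.TTheory GRing.Theory Num.Theory.
Local Open Scope classical_set_scope.
Local Open Scope ring_scope.

Definition indep_rv d (T : measurableType d) (R : realType) (P : probability T R)
  (X Y : {RV P >-> R}) : Prop :=
  forall A B : set R, measurable A -> measurable B ->
    P (X @^-1` A `&` Y @^-1` B) = (P (X @^-1` A) * P (Y @^-1` B))%E.

Definition is_density d (T : measurableType d) (R : realType) (P : probability T R)
  (X : {RV P >-> R}) (f : R -> R) : Prop :=
  measurable_fun setT f /\ (forall x, 0 <= f x) /\
  forall A : set R, measurable A ->
    P (X @^-1` A) = (\int[lebesgue_measure]_(x in A) (f x)%:E)%E.

Definition Lfn d (T : measurableType d) (R : realType) (P : probability T R)
  (X1 X2 : {RV P >-> R}) (theta w : R) : \bar R :=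
  (theta%:E * 'E_P[(fun t => X1 t ^+ 2 *
        \1_[set s | w * X1 s ^+ 2 <= (1 - w) * X2 s ^+ 2] t)%R]
   + (1 - theta)%:E * 'E_P[(fun t => X2 t ^+ 2 *
        \1_[set s | (1 - w) * X2 s ^+ 2 < w * X1 s ^+ 2] t)%R])%E.

(* Main.v *)
Require Import Defs.
From HB Require Import structures.
From mathcomp Require Import all_boot all_order all_algebra.
From mathcomp Require Import all_classical all_reals all_analysis.
Import Order.TTheory GRing.Theory Num.Theory.
Local Open Scope classical_set_scope.
Local Open Scope ring_scope.
From mathcomp Require Import lra measurable_realfun.

Definition cost (R : realType) (th w u v : R) :=
  if w * u <= (1 - w) * v then th * u else (1 - th) * v.

Arguments cost {R}.

Section real_lemmas.
Context {R : realType}.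
Implicit Types th w u v : R.
Lemma cost_min th w u v : 0 <= th <= 1 -> 0 <= u -> 0 <= v -> cost th th u v <= cost th w u v.
Proof.
move=> /andP[t0 t1] u0 v0; rewrite /cost.
case: ifPn => h1; case: ifPn => h2 //; rewrite -?ltNge in h1 h2; nra.
Qed.

Lemma cost_up th w1 w2 u v : th <= w1 -> w1 <= w2 -> 0 <= u -> 0 <= v ->
  cost th w1 u v <= cost th w2 u v.
Proof.
move=> h1 h2 u0 v0; rewrite /cost.
case: ifPn => c1; case: ifPn => c2 //; rewrite -?ltNge in c1 c2; nra.
Qed.

Lemma cost_down th w1 w2 u v : w1 <= w2 -> w2 <= th -> 0 <= u -> 0 <= v ->
  cost th w2 u v <= cost th w1 u v.
Proof.
move=> h1 h2 u0 v0; rewrite /cost.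
case: ifPn => c1; case: ifPn => c2 //; rewrite -?ltNge in c1 c2; nra.
Qed.

Lemma cost_up_strict th w1 w2 r1 r2 k u v : th <= w1 -> w1 < r1 -> r2 < w2 -> 0 < k ->
  0 <= u -> 0 <= v -> r1 * (u + v) <= v -> v <= r2 * (u + v) -> k <= u + v ->
  cost th w1 u v + (r1 - th) * k <= cost th w2 u v.
Proof.
move=> h1 h2 h3 k0 u0 v0 b1 b2 kk; rewrite /cost.
case: ifPn => c1; case: ifPn => c2 //; rewrite -?ltNge in c1 c2; nra.
Qed.

Lemma cost_down_strict th w1 w2 r1 r2 k u v : w1 < r1 -> r2 < w2 -> w2 <= th -> 0 < k ->
  0 <= u -> 0 <= v -> r1 * (u + v) <= v -> v <= r2 * (u + v) -> k <= u + v ->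
  cost th w2 u v + (th - r2) * k <= cost th w1 u v.
Proof.
move=> h1 h2 h3 k0 u0 v0 b1 b2 kk; rewrite /cost.
case: ifPn => c1; case: ifPn => c2 //; rewrite -?ltNge in c1 c2; nra.
Qed.

Lemma cost_le th w u v : 0 <= th <= 1 -> 0 <= u -> 0 <= v -> 0 <= cost th w u v <= u + v.
Proof.
move=> /andP[t0 t1] u0 v0; rewrite /cost; case: ifPn => _; apply/andP; split; nra.
Qed.
End real_lemmas.

Lemma density_pos d (T : measurableType d) (R : realType) (P : probability T R)
  (X : {RV P >-> R}) (f : R -> R) (a b : R) :
  is_density X f -> (forall x, 0 < f x) -> a < b ->
  (0 < P (X @^-1` `[a, b]))%E.
Proof.
move=> [mf [f0 hP]] fpos ab.
have mD : measurable (`[a, b]%classic : set R) by exact: measurable_itv.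
rewrite hP //.
rewrite lt0e integral_ge0 ?andbT; last by move=> x _; rewrite lee_fin.
apply/negP => /eqP H.
have : (\int[lebesgue_measure]_(x in `[a, b]%classic) `|(f x)%:E| = 0)%E.
  by rewrite -H; apply: eq_integral => x _; rewrite gee0_abs // lee_fin.
move/ae_eq_integral_abs => /(_ mD).
case.
  by apply/measurable_realfun.measurable_EFinP; exact: (measurable_funS measurableT (@subsetT _ _) mf).
move=> N [mN N0 sub].
have : (lebesgue_measure (`[a, b]%classic : set R) <= lebesgue_measure N)%E.
  apply: le_measure; rewrite ?inE //.
  move=> x Dx; apply: sub => /= /(_ Dx) [] /eqP; by rewrite gt_eqF.
rewrite N0 lebesgue_measure_itv /= lte_fin ab /=.
by rewrite lee_fin subr_le0 leNgt ab.
Qed.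

Lemma rv_preimage d (T : measurableType d) (R : realType) (P : probability T R)
  (X : {RV P >-> R}) (A : set R) : measurable A -> measurable (X @^-1` A).
Proof.
move=> mA; have := measurable_funP X measurableT A mA; by rewrite setTI.
Qed.

Lemma box_pos d (T : measurableType d) (R : realType) (P : probability T R)
  (X1 X2 : {RV P >-> R}) (f1 f2 : R -> R) (a b : R) :
  indep_rv X1 X2 -> is_density X1 f1 -> is_density X2 f2 ->
  (forall x, 0 < f1 x) -> (forall x, 0 < f2 x) ->
  0 <= a -> a < b -> b <= 1 ->
  exists r1 r2 k (Bx : set T), [/\ a < r1 /\ r2 < b, 0 < k, measurable Bx, (0 < P Bx)%E &
    forall t, Bx t -> [/\ r1 * (X1 t ^+ 2 + X2 t ^+ 2) <= X2 t ^+ 2,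
        X2 t ^+ 2 <= r2 * (X1 t ^+ 2 + X2 t ^+ 2) & k <= X1 t ^+ 2 + X2 t ^+ 2]].
Proof.
move=> ind dX1 dX2 p1 p2 a0 ab b1.
pose r1 := (2 * a + b) / 3; pose r2 := (a + 2 * b) / 3.
have r10 : 0 < r1 by rewrite /r1; lra.
have r21 : r2 < 1 by rewrite /r2; lra.
have r12 : r1 < r2 by rewrite /r1 /r2; lra.
have ar1 : a < r1 by rewrite /r1; lra.
have r2b : r2 < b by rewrite /r2; lra.
pose P1 := Num.sqrt (1 - r1); pose P2 := Num.sqrt (1 - r2).
pose Q1 := Num.sqrt r1; pose Q2 := Num.sqrt r2.
have eP1 : P1 ^+ 2 = 1 - r1 by rewrite sqr_sqrtr //; lra.
have eP2 : P2 ^+ 2 = 1 - r2 by rewrite sqr_sqrtr //; lra.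
have eQ1 : Q1 ^+ 2 = r1 by rewrite sqr_sqrtr //; lra.
have eQ2 : Q2 ^+ 2 = r2 by rewrite sqr_sqrtr //; lra.
have P20 : 0 <= P2 by exact: sqrtr_ge0.
have Q10 : 0 <= Q1 by exact: sqrtr_ge0.
have P21 : P2 < P1 by rewrite /P1 /P2 ltr_sqrt; lra.
have Q12 : Q1 < Q2 by rewrite /Q1 /Q2 ltr_sqrt; lra.
exists r1, r2, ((1 - r2) + r1), (X1 @^-1` `[P2, P1] `&` X2 @^-1` `[Q1, Q2]).
split => //.
- lra.
- by apply: measurableI; apply: rv_preimage; exact: measurable_itv.
- rewrite ind; try exact: measurable_itv.
  by apply: mule_gt0; [exact: density_pos dX1 p1 P21|exact: density_pos dX2 p2 Q12].
move=> t [] /=; rewrite !in_itv /= => /andP[h1 h2] /andP[h3 h4].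
have hu1 : 1 - r2 <= X1 t ^+ 2 by rewrite -eP2 !expr2; nra.
have hu2 : X1 t ^+ 2 <= 1 - r1 by rewrite -eP1 !expr2; nra.
have hv1 : r1 <= X2 t ^+ 2 by rewrite -eQ1 !expr2; nra.
have hv2 : X2 t ^+ 2 <= r2 by rewrite -eQ2 !expr2; nra.
split; nra.
Qed.

Section main.
Context d (T : measurableType d) (R : realType) (P : probability T R).
Variables (X1 X2 : {RV P >-> R}).

Lemma mset_lt (f g : T -> R) : measurable_fun setT f -> measurable_fun setT g ->
  measurable [set s | f s < g s].
Proof.
move=> mf mg; have := measurable_fun_ltr mf mg measurableT (I : measurable [set true]).
by rewrite setTI.
Qed.

Lemma mset_le (f g : T -> R) : measurable_fun setT f -> measurable_fun setT g ->
  measurable [set s | f s <= g s].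
Proof.
move=> mf mg; have := measurable_fun_ler mf mg measurableT (I : measurable [set true]).
by rewrite setTI.
Qed.

Definition kappa (th w : R) (t : T) : R :=
  th * (X1 t ^+ 2 * \1_[set s | w * X1 s ^+ 2 <= (1 - w) * X2 s ^+ 2] t) +
  (1 - th) * (X2 t ^+ 2 * \1_[set s | (1 - w) * X2 s ^+ 2 < w * X1 s ^+ 2] t).




Lemma msq (X : {RV P >-> R}) (c : R) : measurable_fun setT (fun t => c * X t ^+ 2).
Proof.
apply: (measurable_funM (f := cst c)) => //.
by apply: measurable_funX.
Qed.

Lemma mkappa th w : measurable_fun setT (kappa th w).
Proof.
apply: measurable_funD; apply: (measurable_funM (f := cst _)) => //;
  apply: measurable_funM; try (by apply: measurable_funX);
  apply: measurable_indic.
  exact: mset_le (msq _ _) (msq _ _).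
exact: mset_lt (msq _ _) (msq _ _).
Qed.

Lemma kappaE th w t : kappa th w t = cost th w (X1 t ^+ 2) (X2 t ^+ 2).
Proof.
rewrite /kappa !indicE /cost; case: ifPn => h.
  have -> : (t \in [set s | w * X1 s ^+ 2 <= (1 - w) * X2 s ^+ 2]) = true.
    by apply: mem_set.
  have -> : (t \in [set s | (1 - w) * X2 s ^+ 2 < w * X1 s ^+ 2]) = false.
    by apply: memNset => /=; rewrite ltNge h.
  by rewrite /= mulr1 mulr0 mulr0 addr0.
have -> : (t \in [set s | w * X1 s ^+ 2 <= (1 - w) * X2 s ^+ 2]) = false.
  by apply: memNset => /=; apply/negP.
have -> : (t \in [set s | (1 - w) * X2 s ^+ 2 < w * X1 s ^+ 2]) = true.
  by apply: mem_set => /=; rewrite ltNge.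
by rewrite /= mulr1 mulr0 mulr0 add0r.
Qed.

Lemma kappa_ge0 th w t : 0 <= th <= 1 -> 0 <= kappa th w t.
Proof. by move=> h; rewrite kappaE; case/andP: (cost_le _ w _ _ h (sqr_ge0 (X1 t)) (sqr_ge0 (X2 t))). Qed.

Lemma kappa_le th w t : 0 <= th <= 1 -> kappa th w t <= X1 t ^+ 2 + X2 t ^+ 2.
Proof. by move=> h; rewrite kappaE; case/andP: (cost_le _ w _ _ h (sqr_ge0 (X1 t)) (sqr_ge0 (X2 t))). Qed.

Lemma Lfn_int th w : 0 <= th <= 1 ->
  Lfn X1 X2 th w = (\int[P]_t (kappa th w t)%:E)%E.
Proof.
move=> /andP[t0 t1].
have m1 : measurable_fun setT (fun t => X1 t ^+ 2 * \1_[set s | w * X1 s ^+ 2 <= (1 - w) * X2 s ^+ 2] t).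
  apply: measurable_funM; first by apply: measurable_funX.
  by apply: measurable_indic; exact: mset_le (msq _ _) (msq _ _).
have m2 : measurable_fun setT (fun t => X2 t ^+ 2 * \1_[set s | (1 - w) * X2 s ^+ 2 < w * X1 s ^+ 2] t).
  apply: measurable_funM; first by apply: measurable_funX.
  by apply: measurable_indic; exact: mset_lt (msq _ _) (msq _ _).
pose g1 := fun t => (X1 t ^+ 2 * \1_[set s | w * X1 s ^+ 2 <= (1 - w) * X2 s ^+ 2] t)%:E.
pose g2 := fun t => (X2 t ^+ 2 * \1_[set s | (1 - w) * X2 s ^+ 2 < w * X1 s ^+ 2] t)%:E.
have g10 : forall t, [set: T] t -> (0 <= g1 t)%E.
  by move=> t _; rewrite lee_fin mulr_ge0 ?sqr_ge0 // indicE ler0n.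
have g20 : forall t, [set: T] t -> (0 <= g2 t)%E.
  by move=> t _; rewrite lee_fin mulr_ge0 ?sqr_ge0 // indicE ler0n.
have mg1 : measurable_fun setT g1 by exact: measurableT_comp.
have mg2 : measurable_fun setT g2 by exact: measurableT_comp.
have t0' : 0 <= 1 - th by rewrite subr_ge0.
rewrite /Lfn unlock.
have -> : (\int[P]_t (kappa th w t)%:E = \int[P]_t (th%:E * g1 t + (1 - th)%:E * g2 t))%E.
  by apply: eq_integral => t _; rewrite /kappa EFinD !EFinM.
rewrite ge0_integralD //.
- rewrite (ge0_integralZl_EFin _ measurableT g10 mg1 t0). rewrite (ge0_integralZl_EFin _ measurableT g20 mg2); [reflexivity|by rewrite subr_ge0].
- by move=> t _; apply: mule_ge0; [rewrite lee_fin|exact: g10].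
- by apply: emeasurable_funM => //.
- by move=> t _; apply: mule_ge0; [rewrite lee_fin|exact: g20].
- by apply: emeasurable_funM => //.
Qed.




Lemma int_strict (g h : T -> R) (Bx : set T) (del : R) :
  measurable_fun setT g -> measurable_fun setT h -> (forall t, 0 <= g t) ->
  (\int[P]_t (g t)%:E < +oo)%E -> measurable Bx -> 0 < del -> (0 < P Bx)%E ->
  (forall t, g t + del * (\1_Bx : T -> R) t <= h t) ->
  (\int[P]_t (g t)%:E < \int[P]_t (h t)%:E)%E.
Proof.
move=> mg mh g0 gfin mB d0 PB gh.
have gi0 : forall t, [set: T] t -> (0 <= (g t)%:E)%E by move=> t _; rewrite lee_fin.
have ii0 : forall t, [set: T] t -> (0 <= ((\1_Bx : T -> R) t)%:E)%E by move=> t _; rewrite lee_fin indicE ler0n.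
have mi : measurable_fun setT (fun t => ((\1_Bx : T -> R) t)%:E).
  by apply: measurableT_comp => //; exact: measurable_indic.
have mg' : measurable_fun setT (fun t => (g t)%:E) by exact: measurableT_comp.
have H : (\int[P]_t ((g t)%:E + del%:E * ((\1_Bx : T -> R) t)%:E) <= \int[P]_t (h t)%:E)%E.
  apply: ge0_le_integral => //.
  - by move=> t _; apply: adde_ge0; [rewrite lee_fin|apply: mule_ge0; rewrite lee_fin ?indicE ?ler0n // ltW].
  - apply: emeasurable_funD => //; exact: emeasurable_funM.
  - exact: measurableT_comp.
  - by move=> t _; rewrite -EFinM -EFinD lee_fin.
rewrite ge0_integralD // in H; last 2 first.
  - by move=> t _; apply: mule_ge0; rewrite lee_fin ?indicE ?ler0n // ltW.
  - exact: emeasurable_funM.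
rewrite (ge0_integralZl_EFin _ measurableT ii0 mi (ltW d0)) integral_indic // setIT in H.
apply: lt_le_trans H.
rewrite lteDl; first by apply: mule_gt0 => //; rewrite lte_fin.
by rewrite ge0_fin_numE // integral_ge0.
Qed.


Lemma kint_fin th w : 0 <= th <= 1 ->
  P.-integrable setT (fun t => (X1 t ^+ 2)%:E) ->
  P.-integrable setT (fun t => (X2 t ^+ 2)%:E) ->
  (\int[P]_t (kappa th w t)%:E < +oo)%E.
Proof.
move=> hth /integrableP[m1 i1] /integrableP[m2 i2].
have e1 : (\int[P]_t `|(X1 t ^+ 2)%:E| = \int[P]_t (X1 t ^+ 2)%:E)%E.
  by apply: eq_integral => t _; rewrite gee0_abs // lee_fin sqr_ge0.
have e2 : (\int[P]_t `|(X2 t ^+ 2)%:E| = \int[P]_t (X2 t ^+ 2)%:E)%E.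
  by apply: eq_integral => t _; rewrite gee0_abs // lee_fin sqr_ge0.
apply: (@le_lt_trans _ _ (\int[P]_t ((X1 t ^+ 2)%:E + (X2 t ^+ 2)%:E))%E).
  apply: ge0_le_integral => //.
  - by move=> t _; rewrite lee_fin kappa_ge0.
  - exact/measurableT_comp/mkappa.
  - exact: emeasurable_funD.
  - by move=> t _; rewrite -EFinD lee_fin kappa_le.
rewrite ge0_integralD //; last 2 first.
- by move=> t _; rewrite lee_fin sqr_ge0.
- by move=> t _; rewrite lee_fin sqr_ge0.
by apply: lte_add_pinfty; rewrite -?e1 -?e2.
Qed.

Hypothesis ind : indep_rv X1 X2.
Variables (f1 f2 : R -> R).
Hypothesis dX1 : is_density X1 f1.
Hypothesis dX2 : is_density X2 f2.
Hypothesis pf1 : forall x, 0 < f1 x.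
Hypothesis pf2 : forall x, 0 < f2 x.
Hypothesis i1 : P.-integrable setT (fun t => (X1 t ^+ 2)%:E).
Hypothesis i2 : P.-integrable setT (fun t => (X2 t ^+ 2)%:E).

Lemma L_up th w1 w2 : 0 <= th <= 1 -> th <= w1 -> w1 < w2 -> w2 <= 1 ->
  (Lfn X1 X2 th w1 < Lfn X1 X2 th w2)%E.
Proof.
move=> hth tw1 w12 w21.
have w10 : 0 <= w1 by case/andP: hth => h _; exact: le_trans tw1.
have [r1 [r2 [k [Bx [[a1 b2] k0 mB PB HB]]]]] := @box_pos _ _ _ _ _ _ _ _ _ _ ind dX1 dX2 pf1 pf2 w10 w12 w21.
rewrite !Lfn_int //.
apply: (@int_strict (kappa th w1) (kappa th w2) Bx ((r1 - th) * k)) => //.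
- exact: mkappa.
- exact: mkappa.
- by move=> t; apply: kappa_ge0.
- exact: kint_fin.
- by apply: mulr_gt0 => //; rewrite subr_gt0; exact: le_lt_trans a1.
move=> t; rewrite !kappaE indicE; case: (boolP (t \in Bx)) => tB.
  have [h1 h2 h3] := HB t (set_mem tB).
  rewrite mulr1; apply: (cost_up_strict _ _ _ _ r2) => //; exact: sqr_ge0.
rewrite mulr0 addr0; apply: cost_up => //; [exact: ltW|exact: sqr_ge0|exact: sqr_ge0].
Qed.

Lemma L_down th w1 w2 : 0 <= th <= 1 -> 0 <= w1 -> w1 < w2 -> w2 <= th ->
  (Lfn X1 X2 th w2 < Lfn X1 X2 th w1)%E.
Proof.
move=> hth w10 w12 w2t.
have w21 : w2 <= 1 by case/andP: hth => _ h; exact: le_trans h.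
have [r1 [r2 [k [Bx [[a1 b2] k0 mB PB HB]]]]] := @box_pos _ _ _ _ _ _ _ _ _ _ ind dX1 dX2 pf1 pf2 w10 w12 w21.
rewrite !Lfn_int //.
apply: (@int_strict (kappa th w2) (kappa th w1) Bx ((th - r2) * k)) => //.
- exact: mkappa.
- exact: mkappa.
- by move=> t; apply: kappa_ge0.
- exact: kint_fin.
- by apply: mulr_gt0 => //; rewrite subr_gt0; exact: lt_le_trans w2t.
move=> t; rewrite !kappaE indicE; case: (boolP (t \in Bx)) => tB.
  have [h1 h2 h3] := HB t (set_mem tB).
  rewrite mulr1; apply: (cost_down_strict _ _ _ r1) => //; exact: sqr_ge0.
rewrite mulr0 addr0; apply: cost_down => //; [exact: ltW|exact: sqr_ge0|exact: sqr_ge0].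
Qed.

End main.

Theorem lemma2 (d : measure_display) (T : measurableType d) (R : realType)
  (P : probability T R) (X1 X2 : {RV P >-> R}) (f1 f2 : R -> R) :
  indep_rv X1 X2 ->
  is_density X1 f1 -> is_density X2 f2 ->
  P.-integrable setT (fun t => (X1 t ^+ 2)%:E) ->
  P.-integrable setT (fun t => (X2 t ^+ 2)%:E) ->
  (forall x, f1 (fine 'E_P[X1] + x) = f1 (fine 'E_P[X1] - x)) ->
  (forall x, f2 (fine 'E_P[X2] + x) = f2 (fine 'E_P[X2] - x)) ->
  (forall x, 0 < f1 x) -> (forall x, 0 < f2 x) ->
  forall theta : R, 0 <= theta <= 1 ->
    (* strict quasi-convexity on [0,1] *)
    (forall x y lam : R, 0 <= x <= 1 -> 0 <= y <= 1 -> x != y -> 0 < lam < 1 ->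
       (Lfn X1 X2 theta (lam * x + (1 - lam) * y)
          < maxe (Lfn X1 X2 theta x) (Lfn X1 X2 theta y))%E) /\
    (* minimized at w = theta *)
    (forall w : R, 0 <= w <= 1 -> (Lfn X1 X2 theta theta <= Lfn X1 X2 theta w)%E).
Proof.
move=> ind d1 d2 i1 i2 _ _ p1 p2 th hth; split.
- move=> x y lam /andP[x0 x1] /andP[y0 y1] xy /andP[l0 l1].
  have Lu := @L_up _ _ _ P X1 X2 ind f1 f2 d1 d2 p1 p2 i1 i2 th.
  have Ld := @L_down _ _ _ P X1 X2 ind f1 f2 d1 d2 p1 p2 i1 i2 th.
  case: (ltgtP x y) => [xy'|yx'|e]; last by rewrite e eqxx in xy.
  + have xz : x < lam * x + (1 - lam) * y by nra.
    have zy : lam * x + (1 - lam) * y < y by nra.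
    rewrite lt_max; apply/orP.
    case: (leP (lam * x + (1 - lam) * y) th) => hz.
      by left; apply: Ld.
    by right; apply: Lu => //; exact: ltW.
  + have xz : y < lam * x + (1 - lam) * y by nra.
    have zy : lam * x + (1 - lam) * y < x by nra.
    rewrite lt_max; apply/orP.
    case: (leP (lam * x + (1 - lam) * y) th) => hz.
      by right; apply: Ld.
    by left; apply: Lu => //; exact: ltW.
- move=> w hw; rewrite !Lfn_int //.
  apply: ge0_le_integral => //.
  + by move=> t _; rewrite lee_fin kappa_ge0.
  + exact/measurableT_comp/mkappa.
  + exact/measurableT_comp/mkappa.
  + by move=> t _; rewrite lee_fin !kappaE; apply: cost_min => //; exact: sqr_ge0.
Qed.
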